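(* Let $r\geqslant 2$ and $n\geqslant 2r-1$. Let $\pi,\beta\in\mathrm{Sym}_n$ with $w_H(\pi)=w_H(\beta)=2r-1$ and $Ts(\pi)=Ts(\beta)$. Suppose $\beta$ has a cycle $(y_1\,y_2\,\ldots\,y_t)$, and $\pi$ is obtained from $\beta$ by replacing this cycle with the two cycles $(y_1\,\ldots\,y_s)$ and $(y_{s+1}\,\ldots\,y_t)$ for some $2\leqslant s\leqslant t-2$, keeping all other cycles of $\beta$. Then $|N_1(\pi)|\geqslant|N_1(\beta)|$ and $|N_2(\pi)|\geqslant|N_2(\beta)|$.
   Context: $\mathrm{Sym}_n$ is the symmetric group on $[n]$, and $w_H(\pi)=|\{i:\pi(i)\neq i\}|$ is the Hamming weight. $Ts(\pi)=\{i:\pi(i)\neq i\}$ and $Tc(\pi)=\{(i,\pi(i)):\pi(i)\neq i\}$. For $\pi$ with $w_H(\pi)=2r-1$, define $N_1(\pi)=\{\sigma\in\mathrm{Sym}_n: Tc(\sigma)\subseteq Tc(\pi),\ |Tc(\sigma)|=r-1\}$, $N_2(\pi)=\{\sigma\in\mathrm{Sym}_n: Tc(\sigma)\subseteq Tc(\pi),\ |Tc(\sigma)|=r\}$, and $N_3(\pi)=\{\sigma\in\mathrm{Sym}_n: |Tc(\sigma)\cap Tc(\pi)|=r-1,\ |Tc(\sigma)|=r\}$. *)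

(* Defs.v *)
From mathcomp Require Import all_boot all_fingroup.
Set Implicit Arguments. Unset Strict Implicit. Unset Printing Implicit Defensive.

(* Sym_n is {perm 'I_n}; points of [n] are the ordinals 'I_n (0-indexed). *)

Definition Ts n (p : {perm 'I_n}) : {set 'I_n} := [set i | p i != i].

Definition wH n (p : {perm 'I_n}) : nat := #|Ts p|.

Definition Tc n (p : {perm 'I_n}) : {set 'I_n * 'I_n} :=
  [set ip | (ip.2 == p ip.1) && (p ip.1 != ip.1)].

Definition N1 n (r : nat) (p : {perm 'I_n}) : {set {perm 'I_n}} :=
  [set s : {perm 'I_n} | (Tc s \subset Tc p) && (#|Tc s| == r.-1)].

Definition N2 n (r : nat) (p : {perm 'I_n}) : {set {perm 'I_n}} :=
  [set s : {perm 'I_n} | (Tc s \subset Tc p) && (#|Tc s| == r)].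

Definition N3 n (r : nat) (p : {perm 'I_n}) : {set {perm 'I_n}} :=
  [set s : {perm 'I_n} | (#|Tc s :&: Tc p| == r.-1) && (#|Tc s| == r)].

(* Main.v *)
Require Import Defs.
From mathcomp Require Import all_boot all_fingroup.
From mathcomp Require Import zify.

Lemma modS_neq a t : a < t -> 1 < t -> (a.+1 %% t != a).
Proof. move=> h1 h2. case: (ltngtP a.+1 t) => h.
- by rewrite modn_small // gtn_eqF.
- lia.
- by rewrite h modnn; lia. Qed.
Lemma modP j t : j < t -> 0 < t -> (((j + t).-1 %% t).+1 %% t) = j.
Proof. move=> h1 h2. rewrite -addn1 modnDml addn1 prednK; last lia.
by rewrite modnDr modn_small. Qed.
Lemma modQ i j t : (((i+j) %% t).+1 %% t) = (i + j.+1) %% t.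
Proof. by rewrite -addn1 modnDml addn1 addnS. Qed.
Lemma modR i t : i < t -> (i + (t - i)) %% t = 0.
Proof. move=> *. by rewrite subnKC ?modnn // ltnW. Qed.

Lemma TcsubP n (s p : {perm 'I_n}) :
  reflect (forall x, s x != x -> s x = p x) (Tc s \subset Tc p).
Proof.
apply: (iffP subsetP).
- move=> H x Hx.
  have: (x, s x) \in Tc p by apply: H; rewrite inE /= eqxx Hx.
  by rewrite inE /= => /andP[/eqP].
- move=> H [a b]; rewrite !inE /= => /andP[/eqP -> Ha].
  by rewrite (H a Ha) eqxx /= -(H a Ha) Ha.
Qed.

Lemma cardTc n (p : {perm 'I_n}) : #|Tc p| = #|Ts p|.
Proof.
have -> : Tc p = [set (i, p i) | i in Ts p].
  apply/setP=> [[a b]]; rewrite !inE /=; apply/andP/imsetP.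
  - by case=> /eqP -> Ha; exists a; rewrite ?inE.
  - by case=> i; rewrite inE => Hi [-> ->]; rewrite eqxx Hi.
by rewrite card_imset // => a b [].
Qed.

Theorem lemma11 (n r : nat) (pi beta : {perm 'I_n}) (ys : seq 'I_n) (t s : nat) :
  2 <= r -> 2 * r - 1 <= n ->
  wH pi = 2 * r - 1 -> wH beta = 2 * r - 1 -> Ts pi = Ts beta ->
  uniq ys -> size ys = t ->
  (forall x0 i, i < t -> beta (nth x0 ys i) = nth x0 ys (i.+1 %% t)) ->
  2 <= s -> s <= t - 2 ->
  (forall x0 i, i < s -> pi (nth x0 ys i) = nth x0 ys (i.+1 %% s)) ->
  (forall x0 i, s <= i < t ->
     pi (nth x0 ys i) = nth x0 ys (s + (i.+1 - s) %% (t - s))) ->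
  (forall x, x \notin ys -> pi x = beta x) ->
  #|N1 r beta| <= #|N1 r pi| /\ #|N2 r beta| <= #|N2 r pi|.
Proof.
move=> _ _ _ _ TsE Uys Sz Hb s2 st Hp1 Hp2 Hout.
have t4 : 4 <= t by lia.
have [x0 _] : exists x0 : 'I_n, True.
  by case: ys Sz {Uys Hb Hp1 Hp2 Hout} => [|y ?] Sz; [rewrite -Sz in t4|exists y].
set y := nth x0 ys.
have memys : forall x, x \in ys -> exists2 i, i < t & x = y i.
  by move=> x hx; exists (index x ys); [rewrite -Sz index_mem | rewrite /y nth_index].
have yinj : forall i j, i < t -> j < t -> y i = y j -> i = j.
  by move=> i j hi hj /eqP; rewrite /y nth_uniq ?Sz // => /eqP.
have ymem : forall i, i < t -> y i \in ys by move=> i hi; rewrite mem_nth ?Sz.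
have betaN : forall i, i < t -> beta (y i) != y i.
  move=> i hi; rewrite /y Hb //; apply/eqP => e.
  have t0' : 0 < t by lia.
  have t1 : 1 < t by lia.
  have e' := yinj _ _ (ltn_pmod _ t0') hi e.
  by have := modS_neq _ _ hi t1; rewrite e' eqxx.
have piN : forall x, (pi x != x) = (beta x != x).
  by move=> x; have := congr1 (fun A : {set 'I_n} => x \in A) TsE; rewrite /Ts !inE.
have piys : forall i, i < t -> pi (y i) \in ys.
  move=> i hi; case: (ltnP i s) => his.
  - rewrite /y Hp1 // mem_nth // Sz; apply: leq_trans (ltn_pmod _ _) _; lia.
  - rewrite /y Hp2 ?his // mem_nth // Sz.
    have := ltn_pmod (i.+1 - s) (_ : 0 < t - s); lia.
have delta : forall i, i < t -> exists2 j, j < t & beta (y j) = pi (y i).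
  move=> i hi; have [m hm ->] := memys _ (piys i hi).
  exists ((m + t).-1 %% t); first by rewrite ltn_pmod //; lia.
  by rewrite /y Hb ?modP //; [lia | rewrite ltn_pmod //; lia].
pose d := (pi * beta^-1)%g.
have dout : forall x, x \notin ys -> d x = x.
  by move=> x hx; rewrite permM Hout // permK.
have prop : forall sg : {perm 'I_n}, (forall x, sg x != x -> sg x = beta x) ->
    forall i, i < t -> sg (y i) != y i ->
    forall j, sg (y ((i + j) %% t)) != y ((i + j) %% t).
  move=> sg H i hi hmv; elim=> [|j IH]; first by rewrite addn0 modn_small.
  have ha : (i + j) %% t < t by rewrite ltn_pmod //; lia.
  have e1 := H _ IH; rewrite /y Hb // -/y modQ in e1.
  apply/eqP => e2.
  have t0' : 0 < t by lia.
  have t1 : 1 < t by lia.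
  have e3 : y ((i + j) %% t) = y ((i + j.+1) %% t).
    by apply: (@perm_inj _ sg); rewrite e1 e2.
  have e4 := yinj _ _ ha (ltn_pmod _ t0') e3.
  by have := modS_neq _ _ ha t1; rewrite modQ -e4 eqxx.
have t0 : 0 < t by lia.
have moveall : forall sg : {perm 'I_n}, (forall x, sg x != x -> sg x = beta x) ->
    sg (y 0) != y 0 -> forall i, i < t -> sg (y i) != y i.
  move=> sg H h0 i hi; have := prop sg H 0 t0 h0 i.
  by rewrite add0n modn_small.
have move0 : forall sg : {perm 'I_n}, (forall x, sg x != x -> sg x = beta x) ->
    forall i, i < t -> sg (y i) != y i -> sg (y 0) != y 0.
  move=> sg H i hi hm; have := prop sg H i hi hm (t - i).
  by rewrite modR.
have C : forall sg : {perm 'I_n}, (forall x, sg x != x -> sg x = beta x) ->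
    sg (y 0) != y 0 -> forall x, (d * sg)%g x = if x \in ys then pi x else sg x.
  move=> sg H h0 x; case: ifP => hx; last by rewrite permM dout ?hx //; apply/negbT.
  have [i hi ->] := memys _ hx; have [j hj e] := delta i hi.
  rewrite permM /d permM -e permK; exact: (H _ (moveall sg H h0 j hj)).
have key : forall k,
  #|[set sg : {perm 'I_n} | (Tc sg \subset Tc beta) && (#|Tc sg| == k)]| <=
  #|[set sg : {perm 'I_n} | (Tc sg \subset Tc pi) && (#|Tc sg| == k)]|.
  move=> k.
  pose g (sg : {perm 'I_n}) := if sg (y 0) != y 0 then (d * sg)%g else sg.
  have gy0 : forall sg : {perm 'I_n}, (forall x, sg x != x -> sg x = beta x) ->
      (g sg (y 0) != y 0) = (sg (y 0) != y 0).
    move=> sg H; rewrite /g; case: ifP => // h0.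
    by rewrite C // ymem // piN betaN // h0.
  have ginj : {in [set sg : {perm 'I_n} | (Tc sg \subset Tc beta) && (#|Tc sg| == k)] &, injective g}.
    move=> a b; rewrite !inE => /andP[/TcsubP Ha _] /andP[/TcsubP Hb' _] e.
    have := congr1 (fun p : {perm 'I_n} => p (y 0) != y 0) e.
    rewrite /= !gy0 // => e0; move: e; rewrite /g e0.
    by case: ifP => // _; apply: mulgI.
  rewrite -(card_in_imset ginj); apply: subset_leq_card.
  apply/subsetP => _ /imsetP[sg Hsg ->]; move: Hsg; rewrite !inE.
  case/andP=> /TcsubP H /eqP <-; rewrite /g; case: ifP => h0.
  - apply/andP; split.
    + apply/TcsubP => x; rewrite C //; case: ifP => // hx hs.
      by rewrite H // Hout ?hx.
    + rewrite !cardTc; apply/eqP/eq_card => x; rewrite !inE C //.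
      case: ifP => // hx; have [i hi ->] := memys _ hx.
      by rewrite piN betaN // moveall.
  - rewrite eqxx andbT; apply/TcsubP => x hs.
    have hx : x \notin ys.
      apply/negP => hx; have [i hi ex] := memys _ hx; subst x.
      by move: h0 (move0 sg H i hi hs) => /negbT; rewrite negbK => /eqP ->; rewrite eqxx.
    by rewrite H // Hout.
by split; apply: key.
Qed.
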